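(* Let $Z$ be a smooth extremal assignment of order $n$ with contraction indicator $\mathcal{C}$, and let $B_1,\dots,B_k$ be the maximal elements of $\mathcal{C}$. Suppose one of the following holds: (1) there is $j\in[n]$ with $j\notin\bigcup_{i=1}^k B_i$; (2) there is $j\in[n]$ contained in exactly one of $B_1,\dots,B_k$; (3) $|B_i|<n/2$ for all $i$. Then there exists weight data $A$ with $Z\subset Z_A$ (i.e. $Z(G)\subset Z_A(G)$ for all $G\in S(n)$).
   Context: $[n]=\{1,\dots,n\}$. A stable $n$-labeled tree is a finite tree with $n$ leaves labeled bijectively by $[n]$, all internal vertices of degree $\ge 3$; $V(G)$ its internal vertices; $S(n)$ the set of such trees up to label-preserving isomorphism, $S_2(n)$ those with 2 internal vertices; $\ell(v)$ is the set of labels of leaves adjacent to $v$. $G\rightsquigarrow G'$: $G'$ obtained by collapsing connected sets of internal vertices, inducing surjection $\pi:V(G)\to V(G')$; $v\rightsquigarrow v'$ means $\pi(v)=v'$. An extremal assignment of order $n$: rule $Z(G)\subset V(G)$ for $G\in S(n)$ with (a) $Z(G)\ne V(G)$, (b) if $G\rightsquigarrow G'$ and $\pi^{-1}(v')=\{v_1,\dots,v_k\}$ then $v'\in Z(G')\iff v_1,\dots,v_k\in Z(G)$. $Z$ is smooth if for every $G$, $v\in Z(G)$ there are $G'\in S_2(n)$, $v'\in Z(G')$ with $G\rightsquigarrow G'$, $v\rightsquigarrow v'$. The contraction indicator of $Z$ is $\mathcal{C}=\{\ell(v):G\in S_2(n),v\in Z(G)\}$. Weight data: $A=(a_1,\dots,a_n)$,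 $a_i\in\mathbb{Q}\cap(0,1]$, $\sum a_i>2$. A tail of $G$ is a nonempty connected $T\subset V(G)$ joined to $V(G)\setminus T$ by exactly one edge; $\ell(T)$ the labels of leaves adjacent to $T$. $Z_A(G)=\{v\in V(G):\exists$ tail $T\ni v$ with $\sum_{i\in\ell(T)}a_i\le1\}$. *)

(* Defs.v *)
From HB Require Import structures.
From mathcomp Require Import all_boot all_order all_algebra.
Set Implicit Arguments. Unset Strict Implicit. Unset Printing Implicit Defensive.
Import Order.TTheory GRing.Theory Num.Theory.

(* A stable n-labeled tree, represented concretely: its internal vertices are
   'I_sm; leaf i (label i) is attached to internal vertex slf i; sadj is the
   adjacency relation between internal vertices.  The whole tree (leaves +
   internal vertices) is a tree iff the internal graph is a tree (nonempty,
   connected, with sm-1 edges), leaves being pendant. *)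
Record stree (n : nat) := STree {
  sm : nat;
  slf : 'I_n -> 'I_sm;
  sadj : rel 'I_sm;
  sadj_sym : symmetric sadj;
  sadj_irr : irreflexive sadj;
  sm_pos : 0 < sm;
  sadj_conn : forall x y : 'I_sm, connect sadj x y;
  sadj_edges : #|[set p : 'I_sm * 'I_sm | sadj p.1 p.2]| = (2 * (sm - 1))%N;
  sdeg : forall v : 'I_sm,
    3 <= #|[set i : 'I_n | slf i == v]| + #|[set w | sadj v w]|
}.

Definition lab n (G : stree n) (v : 'I_(sm G)) : {set 'I_n} :=
  [set i | @slf n G i == v].

(* G ~> G' via the induced map p : V(G) -> V(G'): G' is (isomorphic to) the
   tree obtained by collapsing the fibres of p, which are connected sets of
   internal vertices. Isomorphisms are the special case of bijective p. *)
Definition contr n (G G' : stree n) (p : 'I_(sm G) -> 'I_(sm G')) : Prop :=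
  [/\ (forall v', exists v, p v = v'),
      (forall v w, p v = p w ->
          connect [rel x y | @sadj n G x y && (p x == p y)] v w),
      (forall i, @slf n G' i = p (@slf n G i)) &
      (forall v' w', v' != w' ->
          (@sadj n G' v' w' <-> exists v w, [/\ p v = v', p w = w' & @sadj n G v w]))].

Definition assignment n := forall G : stree n, {set 'I_(sm G)}.

Definition extremal n (Z : assignment n) : Prop :=
  (forall G : stree n, Z G != [set: 'I_(sm G)]) /\
  (forall (G G' : stree n) (p : 'I_(sm G) -> 'I_(sm G')), contr p ->
     forall v', v' \in Z G' <-> (forall v, p v = v' -> v \in Z G)).

Definition smooth n (Z : assignment n) : Prop :=
  forall (G : stree n) (v : 'I_(sm G)), v \in Z G ->
    exists (G' : stree n) (p : 'I_(sm G) -> 'I_(sm G')),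
      [/\ sm G' = 2, contr p & p v \in Z G'].

Definition inC n (Z : assignment n) (B : {set 'I_n}) : Prop :=
  exists (G : stree n) (v : 'I_(sm G)), [/\ sm G = 2, v \in Z G & lab v = B].

Definition maximalC n (Z : assignment n) (B : {set 'I_n}) : Prop :=
  inC Z B /\ forall B', inC Z B' -> B \subset B' -> B' = B.

Definition weight_data n (a : 'I_n -> rat) : Prop :=
  (forall i, 0 < a i <= 1)%R /\ (2 < \sum_(i < n) a i)%R.

Definition tail n (G : stree n) (T : {set 'I_(sm G)}) : Prop :=
  [/\ T != set0,
      (forall x y, x \in T -> y \in T ->
          connect [rel u w | @sadj n G u w && (u \in T) && (w \in T)] x y) &
      #|[set p : 'I_(sm G) * 'I_(sm G) |
           [&& p.1 \in T, p.2 \notin T & @sadj n G p.1 p.2]]| = 1%N].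

Definition tlab n (G : stree n) (T : {set 'I_(sm G)}) : {set 'I_n} :=
  [set i | @slf n G i \in T].

Definition inZA n (a : 'I_n -> rat) (G : stree n) (v : 'I_(sm G)) : Prop :=
  exists T : {set 'I_(sm G)}, [/\ tail T, v \in T & (\sum_(i in tlab T) a i <= 1)%R].

(* Main.v *)
Require Import Defs.
From HB Require Import structures.
From mathcomp Require Import all_boot all_order all_algebra zify.
From Stdlib Require Import Classical.
Import Order.TTheory GRing.Theory Num.Theory.
Set Implicit Arguments. Unset Strict Implicit. Unset Printing Implicit Defensive.

Lemma exit_edge (T : finType) (e : rel T) (X : {set T}) x y :
  connect e x y -> x \in X -> y \notin X ->
  exists a b, [/\ a \in X, b \notin X & e a b].
Proof.
move/connectP=> [p pth ->]; elim: p x pth => [|z p IH] x /=.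
  by move=> _ ->.
move=> /andP[exz pz] xX; case zX: (z \in X).
  exact: IH.
by move=> _; exists x, z; rewrite zX.
Qed.

Lemma fiber_connect (T : finType) (T' : eqType) (e : rel T) (p : T -> T') c x y :
  connect [rel a b | e a b && (p a == p b)] x y -> p x = c ->
  connect [rel a b | e a b && (p a == c) && (p b == c)] x y.
Proof.
move/connectP=> [s pth ->]; elim: s x pth => [|z s IH] x /=.
  by move=> _ _; exact: connect0.
move=> /andP[/andP[exz /eqP pxz] pz] pxc.
apply: (connect_trans (y:=z)); last by apply: IH => //; rewrite -pxz.
by apply: connect1; rewrite /= exz pxc -pxz pxc !eqxx.
Qed.

Lemma internal_lb (T : finType) (e : rel T) (esym : symmetric e) (S : {set T}) r :
  r \in S ->
  (forall y, y \in S -> connect [rel a b | e a b && (a \in S) && (b \in S)] r y) ->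
  (2 * (#|S| - 1) <= #|[set q : T * T | [&& q.1 \in S, q.2 \in S & e q.1 q.2]]|)%N.
Proof.
move=> rS conn.
pose I (X : {set T}) := [set q : T * T | [&& q.1 \in X, q.2 \in X & e q.1 q.2]].
have claim : forall k, (k < #|S|)%N -> exists X : {set T},
    [/\ X \subset S, r \in X, #|X| = k.+1 & (2 * k <= #|I X|)%N].
  elim=> [|k IH] hk.
    by exists [set r]; rewrite sub1set rS set11 cards1.
  have [|X [sXS rX cX lX]] := IH; first by apply: ltnW.
  have : ~~ (S \subset X).
    apply/negP => /subset_leq_card; rewrite cX; move: hk; lia.
  case/subsetPn => y yS yX.
  have [a [b [aX bX /andP[/andP[eab aS] bS]]]] := exit_edge (conn y yS) rX yX.
  exists (b |: X); split.
  - by rewrite subUset sub1set bS sXS.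
  - by rewrite in_setU1 rX orbT.
  - by rewrite cardsU1 bX cX.
  have ab : a != b by apply: contraNneq bX => <-.
  have sub : (a, b) |: ((b, a) |: I X) \subset I (b |: X).
    apply/subsetP => q; rewrite !inE.
    case/orP => [/eqP -> /=|/orP [/eqP -> /=|/and3P [q1 q2 eq]]].
    - by rewrite eqxx eab aX !orbT.
    - by rewrite eqxx esym eab aX !orbT.
    - by rewrite q1 q2 eq !orbT.
  apply: leq_trans (subset_leq_card sub).
  rewrite cardsU1 cardsU1.
  have n1 : (b, a) \notin I X by rewrite !inE /= (negbTE bX).
  have n2 : (a, b) \notin (b, a) |: I X.
    by rewrite !inE /= (negbTE bX) !andbF orbF xpair_eqE (negbTE ab).
  by rewrite n1 n2 /= !add1n mulnS add2n !ltnS.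
have Spos : (0 < #|S|)%N by apply/card_gt0P; exists r.
have [|X [sXS rX cX lX]] := claim (#|S| - 1)%N; first by move: Spos; lia.
have XS : X = S.
  apply/eqP; rewrite eqEcard sXS cX; move: Spos; lia.
by rewrite -XS; move: lX; rewrite XS.
Qed.

Lemma two_other n (G : stree n) (H : sm G = 2) (u : 'I_(sm G)) : exists u', u != u'.
Proof.
have h0 : (0 < sm G)%N by rewrite H.
have h1 : (1 < sm G)%N by rewrite H.
case: (eqVneq u (Ordinal h0)) => [->|ne]; last by exists (Ordinal h0).
by exists (Ordinal h1); apply/eqP => /(congr1 val).
Qed.

Lemma two_cases n (G : stree n) (H : sm G = 2) (u u' x : 'I_(sm G)) :
  u != u' -> x = u \/ x = u'.
Proof.
move=> uu'; case: (eqVneq x u) => [->|xu]; first by left.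
case: (eqVneq x u') => [->|xu']; first by right.
have U : uniq [:: u; u'; x] by rewrite /= !inE negb_or uu' eq_sym xu eq_sym xu'.
have h := max_card (mem [:: u; u'; x]); rewrite (card_uniqP U) card_ord /= in h.
by rewrite H in h.
Qed.

Lemma two_adj n (G : stree n) (H : sm G = 2) (u u' : 'I_(sm G)) :
  u != u' -> @sadj n G u u'.
Proof.
move=> uu'.
have : (0 < #|[set q : 'I_(sm G) * 'I_(sm G) | @sadj n G q.1 q.2]|)%N.
  by rewrite sadj_edges H.
case/card_gt0P => -[x y]; rewrite inE /= => exy.
have xy : x != y by apply: contraTneq exy => ->; rewrite sadj_irr.
move: exy xy; case: (two_cases H (x) uu') => ->; case: (two_cases H (y) uu') => ->.
- by rewrite eqxx.
- by [].
- by rewrite sadj_sym.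
- by rewrite eqxx.
Qed.

Lemma two_lab n (G : stree n) (H : sm G = 2) (u u' : 'I_(sm G)) :
  u != u' -> lab u' = ~: lab u.
Proof.
move=> uu'; apply/setP => i; rewrite !inE.
case: (two_cases H (@slf n G i) uu') => ->; first by rewrite eqxx (negbTE uu').
by rewrite eqxx eq_sym (negbTE uu').
Qed.

Lemma two_labcard n (G : stree n) (H : sm G = 2) (u u' : 'I_(sm G)) :
  u != u' -> (2 <= #|lab u|)%N.
Proof.
move=> uu'; have h : (3 <= #|lab u| + #|[set w | @sadj n G u w]|)%N := sdeg u.
have : (#|[set w | @sadj n G u w]| <= #|[set u']|)%N.
  apply: subset_leq_card; apply/subsetP => w; rewrite !inE => uw.
  have wu : w != u by apply: contraTneq uw => ->; rewrite sadj_irr.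
  by case: (two_cases H (w) uu') => E; [rewrite E eqxx in wu | rewrite E].
rewrite cards1; move: h; lia.
Qed.

Lemma inC_card n (Z : assignment n) B : inC Z B -> (2 <= #|B|)%N /\ (2 <= #|~: B|)%N.
Proof.
move=> [G [v [H vZ <-]]].
have [u' vu'] := two_other H v.
split; first exact: (two_labcard H vu').
rewrite -(two_lab H vu'); apply: (two_labcard H (u':=v)); by rewrite eq_sym.
Qed.

Lemma tail_of_contr n (G G' : stree n) (p : 'I_(sm G) -> 'I_(sm G')) v :
  sm G' = 2 -> contr p ->
  [/\ tail [set u | p u == p v], v \in [set u | p u == p v] &
      tlab [set u | p u == p v] = lab (p v)].
Proof.
move=> H [surj fib lf adj].
set T := [set u | p u == p v].
have vT : v \in T by rewrite inE.
split=> //; last first.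
  by apply/setP => i; rewrite !inE lf.
have [w' vw'] := two_other H (p v).
have [u pu] := surj w'.
have uT : u \notin T by rewrite inE pu eq_sym.
have Tconn : forall c (X : {set 'I_(sm G)}), (forall a, (a \in X) = (p a == c)) ->
    forall x y, x \in X -> y \in X ->
    connect [rel a b | @sadj n G a b && (a \in X) && (b \in X)] x y.
  move=> c X HX x y; rewrite !HX => /eqP xc /eqP yc.
  apply: connect_sub (fiber_connect (fib x y (etrans xc (esym yc))) xc).
  move=> a b /= /andP[/andP[eab pa] pb]; apply: connect1.
  by rewrite /= eab !HX pa pb.
have HT : forall a, (a \in T) = (p a == p v) by move=> a; rewrite inE.
have HTc : forall a, (a \in ~: T) = (p a == w').
  move=> a; rewrite !inE; case: (two_cases H (p a) vw') => ->.
    by rewrite eqxx (negbTE vw').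
  by rewrite eqxx eq_sym vw'.
clearbody T.
split.
- by apply/set0Pn; exists v.
- exact: Tconn HT.
pose E := [set q : 'I_(sm G) * 'I_(sm G) | @sadj n G q.1 q.2].
pose B1 := [set q : 'I_(sm G) * 'I_(sm G) | q.1 \in T].
pose B2 := [set q : 'I_(sm G) * 'I_(sm G) | q.2 \in T].
set C1 := [set q | _].
pose C2 := [set q : 'I_(sm G) * 'I_(sm G) | [&& q.1 \notin T, q.2 \in T & @sadj n G q.1 q.2]].
pose IT := [set q : 'I_(sm G) * 'I_(sm G) | [&& q.1 \in T, q.2 \in T & @sadj n G q.1 q.2]].
pose ITc := [set q : 'I_(sm G) * 'I_(sm G) | [&& q.1 \in ~: T, q.2 \in ~: T & @sadj n G q.1 q.2]].
have cE : #|E| = (#|IT| + #|C1| + #|C2| + #|ITc|)%N.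
  rewrite -(cardsID B1 E) -(cardsID B2 (E :&: B1)) -(cardsID B2 (E :\: B1)).
  have -> : E :&: B1 :&: B2 = IT by apply/setP => q; rewrite !inE; case: (q.1 \in T); case: (q.2 \in T); rewrite /= ?andbF ?andbT.
  have -> : E :&: B1 :\: B2 = C1 by apply/setP => q; rewrite !inE; case: (q.1 \in T); case: (q.2 \in T); rewrite /= ?andbF ?andbT.
  have -> : (E :\: B1) :&: B2 = C2 by apply/setP => q; rewrite !inE; case: (q.1 \in T); case: (q.2 \in T); rewrite /= ?andbF ?andbT.
  have -> : E :\: B1 :\: B2 = ITc by apply/setP => q; rewrite !inE; case: (q.1 \in T); case: (q.2 \in T); rewrite /= ?andbF ?andbT.
  lia.
have lIT : (2 * (#|T| - 1) <= #|IT|)%N := internal_lb (@sadj_sym n G) vT (fun y => Tconn _ _ HT v y vT).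
have uTc : u \in ~: T by rewrite inE.
have lITc : (2 * (#|~: T| - 1) <= #|ITc|)%N := internal_lb (@sadj_sym n G) uTc (fun y => Tconn _ _ HTc u y uTc).
have cTc := cardsC T; rewrite card_ord in cTc.
have [a [b [aT bT eab]]] := exit_edge (@sadj_conn n G v u) vT uT.
have c1 : (0 < #|C1|)%N by apply/card_gt0P; exists (a, b); rewrite !inE /= aT bT eab.
have c2 : (0 < #|C2|)%N.
  by apply/card_gt0P; exists (b, a); rewrite !inE /= aT bT sadj_sym eab.
have Tp : (0 < #|T|)%N by apply/card_gt0P; exists v.
have Tcp : (0 < #|~: T|)%N by apply/card_gt0P; exists u.
move: cE; rewrite /E sadj_edges.
move: lIT lITc cTc c1 c2 Tp Tcp; lia.
Qed.

Lemma mk_contr2 n (G G' : stree n) (X : {set 'I_(sm G)}) (u u' : 'I_(sm G')) :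
  sm G' = 2 -> u != u' ->
  (forall x y, x \in X -> y \in X ->
     connect [rel a b | @sadj n G a b && (a \in X) && (b \in X)] x y) ->
  (forall x y, x \in ~: X -> y \in ~: X ->
     connect [rel a b | @sadj n G a b && (a \in ~: X) && (b \in ~: X)] x y) ->
  (exists a b, [/\ a \in X, b \notin X & @sadj n G a b]) ->
  (forall i, (@slf n G i \in X) = (@slf n G' i == u)) ->
  contr (fun x => if x \in X then u else u').
Proof.
move=> H uu' cX cXc [a [b [aX bX eab]]] hl.
split.
- move=> v'; case: (two_cases H v' uu') => ->; [exists a | exists b].
    by rewrite aX.
  by rewrite (negbTE bX).
- move=> v w; case vX: (v \in X); case wX: (w \in X) => E.
  + apply: connect_sub (cX v w vX wX) => x y /= /andP[/andP[exy xX] yX].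
    by apply: connect1; rewrite /= exy xX yX eqxx.
  + by move: uu'; rewrite E eqxx.
  + by move: uu'; rewrite E eqxx.
  + have vX' : v \in ~: X by rewrite inE vX.
    have wX' : w \in ~: X by rewrite inE wX.
    apply: connect_sub (cXc v w vX' wX') => x y /= /andP[/andP[exy xX] yX].
    rewrite !inE in xX yX.
    by apply: connect1; rewrite /= exy (negbTE xX) (negbTE yX) eqxx.
- move=> i; rewrite hl; case: (two_cases H (@slf n G' i) uu') => ->.
    by rewrite eqxx.
  by rewrite eq_sym (negbTE uu').
- move=> v' w' vw'; split=> _; last by apply: (two_adj H).
  rewrite -/(is_true _) in vw'.
  case: (two_cases H v' uu') => Ev; case: (two_cases H w' uu') => Ew;
    rewrite Ev Ew ?eqxx in vw' *; rewrite ?eqxx // in vw'.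
  + by exists a, b; rewrite aX (negbTE bX).
  + by exists b, a; rewrite aX (negbTE bX) sadj_sym.
Qed.

Definition r3 := [rel x y : 'I_3 | (x.+1 == y :> nat) || (y.+1 == x :> nat)].
Definition o0 : 'I_3 := @Ordinal 3 0 isT.
Definition o1 : 'I_3 := @Ordinal 3 1 isT.
Definition o2 : 'I_3 := @Ordinal 3 2 isT.

Lemma E3 (x : 'I_3) : x = o0 \/ x = o1 \/ x = o2.
Proof.
move: x => [[|[|[|m]]] Hm]; [> left | right;left | right;right | by []]; by apply: val_inj.
Qed.

Lemma r3_sym : symmetric r3.
Proof. by move=> x y /=; rewrite orbC. Qed.

Lemma r3_irr : irreflexive r3.
Proof. by move=> x /=; rewrite orbb; apply/negP => /eqP; lia. Qed.

Lemma r3_edges : #|[set p : 'I_3 * 'I_3 | r3 p.1 p.2]| = (2 * (3 - 1))%N.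
Proof.
have -> : #|[set p : 'I_3 * 'I_3 | r3 p.1 p.2]| = #|[:: (o0,o1);(o1,o0);(o1,o2);(o2,o1)]|.
  by apply: eq_card => -[[[|[|[|?]]] ?] [[|[|[|?]]] ?]]; rewrite !inE /=.
by have /card_uniqP -> : uniq [:: (o0,o1);(o1,o0);(o1,o2);(o2,o1)] by [].
Qed.

Lemma r3_conn : forall x y : 'I_3, connect r3 x y.
Proof.
have h01 : connect r3 o0 o1 by apply: connect1.
have h12 : connect r3 o1 o2 by apply: connect1.
have h10 : connect r3 o1 o0 by apply: connect1.
have h21 : connect r3 o2 o1 by apply: connect1.
have h02 := connect_trans h01 h12.
have h20 := connect_trans h21 h10.
move=> x y; case: (E3 x) => [->|[->|->]]; case: (E3 y) => [->|[->|->]] //; exact: connect0.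
Qed.

Definition slf3 n (B1 B2 : {set 'I_n}) (i : 'I_n) : 'I_3 :=
  if i \notin B2 then o0 else if i \in B1 then o1 else o2.

Lemma deg3 n (B1 B2 : {set 'I_n}) :
  ~: B2 \subset B1 -> (2 <= #|~: B2|)%N -> (2 <= #|~: B1|)%N -> (0 < #|B1 :&: B2|)%N ->
  forall v : 'I_3, (3 <= #|[set i : 'I_n | slf3 B1 B2 i == v]| + #|[set w | r3 v w]|)%N.
Proof.
move=> sub c2 c1 c12 v.
case: (E3 v) => [->|[->|->]].
- have -> : [set i : 'I_n | slf3 B1 B2 i == o0] = ~: B2.
    apply/setP => i; rewrite !inE /slf3.
    by case: (i \in B2); case: (i \in B1).
  have : (0 < #|[set w | r3 o0 w]|)%N by apply/card_gt0P; exists o1; rewrite inE.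
  move=> h; exact: leq_add c2 h.
- have -> : [set i : 'I_n | slf3 B1 B2 i == o1] = B1 :&: B2.
    apply/setP => i; rewrite !inE /slf3.
    by case: (i \in B2); case: (i \in B1).
  have : (#|[set o0; o2]| <= #|[set w | r3 o1 w]|)%N.
    by apply: subset_leq_card; apply/subsetP => w; rewrite !inE => /orP[] /eqP ->.
  rewrite cards2 => h; exact: leq_add c12 h.
- have -> : [set i : 'I_n | slf3 B1 B2 i == o2] = ~: B1.
    apply/setP => i; rewrite !inE /slf3.
    case iB2: (i \in B2); case iB1: (i \in B1) => //.
    by move/subsetP: sub => /(_ i); rewrite !inE iB2 iB1 => /(_ isT).
  have : (0 < #|[set w | r3 o2 w]|)%N by apply/card_gt0P; exists o1; rewrite inE.
  move=> h; exact: leq_add c1 h.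
Qed.

Definition G3 n (B1 B2 : {set 'I_n}) hd : stree n :=
  @STree n 3 (slf3 B1 B2) r3 r3_sym r3_irr isT r3_conn r3_edges hd.

Lemma Zfull n (Z : assignment n) (G : stree n) : extremal Z -> (forall x, x \in Z G) -> False.
Proof.
move=> [ha _] h; move: (ha G) => /eqP; apply; apply/setP => x; by rewrite inE h.
Qed.

Lemma no_cover n (Z : assignment n) B1 B2 :
  extremal Z -> inC Z B1 -> inC Z B2 -> exists i, i \notin B1 :|: B2.
Proof.
move=> ext h1 h2.
case: (boolP [exists i, i \notin B1 :|: B2]) => [/existsP//|/existsPn hall].
exfalso.
have cov : forall i, i \in B1 :|: B2 by move=> i; move: (hall i); rewrite negbK.
have [c1 c1c] := inC_card h1; have [c2 c2c] := inC_card h2.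
move: h1 h2 => [G1 [v1 [H1 v1Z l1]]] [G2 [v2 [H2 v2Z l2]]].
have [v1' n1] := two_other H1 v1.
have [v2' n2] := two_other H2 v2.
have L1 : forall i, (@slf n G1 i == v1) = (i \in B1) by move=> i; rewrite -l1 inE.
have L2 : forall i, (@slf n G2 i == v2) = (i \in B2) by move=> i; rewrite -l2 inE.
case: (boolP (B1 :&: B2 == set0)) => [/eqP dis | /set0Pn [k kk]].
- have B2c : B2 = ~: B1.
    apply/setP => i; rewrite inE; move: (cov i); rewrite inE.
    have := in_set0 i; rewrite -dis inE.
    by case: (i \in B1); case: (i \in B2).
  have n1' : v1' != v1 by rewrite eq_sym.
  have L1' : forall i, (@slf n G1 i == v1') = (i \in ~: B1).
    by move=> i; rewrite -l1 -(two_lab H1 n1) inE.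
  have hc := @mk_contr2 n G2 G1 [set v2] v1' v1 H1 n1'.
  have := (proj2 ext) G2 G1 _ (hc _ _ _ _) v1.
  case.
  + by move=> x y; rewrite !inE => /eqP -> /eqP ->; exact: connect0.
  + move=> x y; rewrite !inE => xv yv.
    have ex : x = v2' by case: (two_cases H2 x n2) => // E; rewrite E eqxx in xv.
    have ey : y = v2' by case: (two_cases H2 y n2) => // E; rewrite E eqxx in yv.
    by rewrite ex ey; exact: connect0.
  + exists v2, v2'; split; first by rewrite inE.
      by rewrite inE eq_sym.
    by apply: (two_adj H2).
  + by move=> i; rewrite inE L2 L1' B2c.
  move=> /(_ v1Z) hz _.
  apply: (@Zfull n Z G2 ext) => x.
  case: (two_cases H2 x n2) => ->; first exact: v2Z.
  by apply: hz; rewrite inE eq_sym (negbTE n2).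
- have sub : ~: B2 \subset B1.
    apply/subsetP => i; rewrite inE => iB2; move: (cov i); rewrite inE (negbTE iB2) orbF.
    by [].
  have c12 : (0 < #|B1 :&: B2|)%N by apply/card_gt0P; exists k.
  pose G := G3 (deg3 sub c2c c1c c12).
  have hc1 := @mk_contr2 n G G1 [set x : 'I_3 | x != o2] v1 v1' H1 n1.
  have := (proj2 ext) G G1 _ (hc1 _ _ _ _) v1.
  case.
  + move=> x y; case: (E3 x) => [->|[->|->]]; case: (E3 y) => [->|[->|->]]; rewrite !inE /= => // _ _;
      try exact: connect0; by apply: connect1; rewrite /= !inE.
  + move=> x y; case: (E3 x) => [->|[->|->]]; case: (E3 y) => [->|[->|->]]; rewrite !inE /= => // _ _;
      try exact: connect0; by apply: connect1; rewrite /= !inE.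
  + by exists o1, o2; rewrite !inE.
  + move=> i; rewrite inE L1 /= /slf3.
    case iB2: (i \in B2); case iB1: (i \in B1) => //=.
    by have := subsetP sub i; rewrite !inE iB2 iB1 => /(_ isT).
  move=> /(_ v1Z) hz1 _.
  have hc2 := @mk_contr2 n G G2 [set x : 'I_3 | x != o0] v2 v2' H2 n2.
  have := (proj2 ext) G G2 _ (hc2 _ _ _ _) v2.
  case.
  + move=> x y; case: (E3 x) => [->|[->|->]]; case: (E3 y) => [->|[->|->]]; rewrite !inE /= => // _ _;
      try exact: connect0; by apply: connect1; rewrite /= !inE.
  + move=> x y; case: (E3 x) => [->|[->|->]]; case: (E3 y) => [->|[->|->]]; rewrite !inE /= => // _ _;
      try exact: connect0; by apply: connect1; rewrite /= !inE.
  + by exists o1, o0; rewrite !inE.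
  + move=> i; rewrite inE L2 /= /slf3.
    by case iB2: (i \in B2); case iB1: (i \in B1).
  move=> /(_ v2Z) hz2 _.
  apply: (@Zfull n Z G ext) => x.
  case: (E3 x) => [->|[->|->]].
  + by apply: hz1; rewrite inE.
  + by apply: hz1; rewrite inE.
  + by apply: hz2; rewrite inE.
Qed.

Lemma max_exists n (Z : assignment n) : forall k (B : {set 'I_n}), (n - #|B| <= k)%N -> inC Z B ->
  exists B', maximalC Z B' /\ B \subset B'.
Proof.
elim=> [|k IH] B hk hB;
 (case: (classic (forall B', inC Z B' -> B \subset B' -> B' = B)) => hm;
   [by exists B; split; [split|] | ]);
 (have [B' hB'] := not_all_ex_not _ _ hm;
  have [iB' hB''] := imply_to_and _ _ hB';
  have [sBB' neq] := imply_to_and _ _ hB'';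
  have pr : B \proper B' by rewrite properEneq sBB' andbT; apply/eqP => E; apply: neq; rewrite E);
 have lt := proper_card pr.
- have mc : (#|B'| <= #|'I_n|)%N := max_card _.
  rewrite card_ord in mc; move: hk lt mc; lia.
- have [B'' [mB'' sB'']] := IH B' (ltac:(move: hk lt; lia)) iB'.
  by exists B''; split => //; apply: subset_trans sBB' sB''.
Qed.

Lemma sum_sub n (k : 'I_n -> nat) (B B' : {set 'I_n}) : B \subset B' ->
  (\sum_(i in B) k i <= \sum_(i in B') k i)%N.
Proof.
move=> s; rewrite [X in (_ <= X)%N](big_setID B) /=.
by rewrite (setIidPr s) leq_addr.
Qed.

Lemma key n (Z : assignment n) (k : 'I_n -> nat) (D : nat) :
  smooth Z -> (forall i, 0 < k i <= D)%N -> (2 * D < \sum_i k i)%N ->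
  (forall B, maximalC Z B -> \sum_(i in B) k i <= D)%N ->
  exists a : 'I_n -> rat, weight_data a /\
    forall (G : stree n) (v : 'I_(sm G)), v \in Z G -> inZA a v.
Proof.
move=> sm hk hs hB.
have Dpos : (0 < D)%N.
  case: D hk hs hB => // hk hs hB.
  by rewrite big1 // in hs => i _; have := hk i; lia.
have Dr : (0 < D%:R :> rat)%R by rewrite ltr0n.
pose a := fun i => ((k i)%:R / D%:R : rat)%R.
have sa : forall A : {pred 'I_n}, (\sum_(i in A) a i = (\sum_(i in A) k i)%:R / D%:R)%R.
  by move=> A; rewrite natr_sum mulr_suml.
exists a; split.
  split.
    move=> i; have /andP[k0 kD] := hk i.
    rewrite /a divr_gt0 ?ltr0n //= ler_pdivrMr // mul1r ler_nat //.
  have -> : (\sum_(i < n) a i = (\sum_(i < n) k i)%:R / D%:R)%R.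
    by rewrite natr_sum mulr_suml.
  by rewrite ltr_pdivlMr // -natrM ltr_nat.
move=> G v vZ.
have [G' [p [H hc pvZ]]] := sm G v vZ.
have [tT vT tl] := tail_of_contr v H hc.
have iC : inC Z (lab (p v)) by exists G', (p v).
have [B' [mB' sB']] := max_exists (leqnn _) iC.
exists [set u | p u == p v]; split => //.
rewrite tl sa ler_pdivrMr // mul1r ler_nat.
exact: leq_trans (sum_sub k sB') (hB _ mB').
Qed.

Lemma sum_if_eq n (A : {set 'I_n}) (j : 'I_n) d :
  (\sum_(i in A) (if i == j then d else 0) = (j \in A) * d)%N.
Proof.
case: (boolP (j \in A)) => jA.
  rewrite (bigD1 j) //= eqxx big1 ?addn0 ?mul1n // => i /andP[_ /negbTE -> //].
rewrite big1 // => i iA; case: eqP => // eij; by rewrite -eij iA in jA.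
Qed.

Lemma sum_if_in n (A S : {set 'I_n}) y z :
  (\sum_(i in A) (if i \in S then y else z) = #|A :&: S| * y + #|A :\: S| * z)%N.
Proof.
rewrite (big_setID S) /=.
have -> : (\sum_(i in A :&: S) (if i \in S then y else z) = \sum_(i in A :&: S) y)%N.
  by apply: eq_bigr => i; rewrite inE => /andP[_ ->].
have -> : (\sum_(i in A :\: S) (if i \in S then y else z) = \sum_(i in A :\: S) z)%N.
  by apply: eq_bigr => i; rewrite inE => /andP[/negbTE -> _].
by rewrite !sum_nat_const.
Qed.

Lemma sumk n (A S : {set 'I_n}) (j : 'I_n) d y z :
  (\sum_(i in A) ((if i == j then d else 0) + (if i \in S then y else z)) =
   (j \in A) * d + (#|A :&: S| * y + #|A :\: S| * z))%N.
Proof. by rewrite big_split /= sum_if_eq sum_if_in. Qed.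

Lemma sum_all n (F : 'I_n -> nat) : (\sum_(i < n) F i = \sum_(i in [set: 'I_n]) F i)%N.
Proof. by apply: eq_bigl => i; rewrite inE. Qed.

Unset Implicit Arguments. Set Strict Implicit.

Theorem proposition7p14 (n : nat) (Hn : 3 <= n) (Z : assignment n) :
  extremal Z -> smooth Z ->
  ((exists j : 'I_n, forall B, maximalC Z B -> j \notin B) \/
   (exists j : 'I_n, exists B, [/\ maximalC Z B, j \in B &
       forall B', maximalC Z B' -> j \in B' -> B' = B]) \/
   (forall B, maximalC Z B -> #|B| * 2 < n)) ->
  exists a : 'I_n -> rat, weight_data a /\
    forall (G : stree n) (v : 'I_(sm G)), v \in Z G -> inZA a v.
Proof.
move=> ext smo [[j hj] | [[j [Bs [mBs jB uq]]] | h3]].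
- apply: (@key n Z (fun i => (if i == j then n - 3 else 0) + (if i \in [set: 'I_n] then 1 else 1))%N (n - 2)) => //.
  + move=> i; case: (i == j); rewrite inE /=; move: Hn; lia.
  + rewrite sum_all sumk in_setT setTI setTD setCT cards0 cardsT card_ord.
    move: Hn; lia.
  + move=> B mB; rewrite sumk (negbTE (hj B mB)) setIT setDT cards0.
    have [_ c2] := inC_card mB.1.
    have cc := cardsC B; rewrite card_ord in cc.
    move: c2 cc; move: (#|B|) (#|~: B|) => x y; lia.
- have [c2 m2] := inC_card mBs.1.
  have cc := cardsC Bs; rewrite card_ord in cc.
  move: c2 m2 cc; set c := #|Bs|; set m := #|~: Bs| => c2 m2 cc.
  have mc : (2 * c <= m * c)%N by rewrite leq_mul2r m2 orbT.
  have e1 : ((m - 1) * c = m * c - c)%N by rewrite mulnBl mul1n.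
  apply: (@key n Z (fun i => (if i == j then (m - 1) * c - 1 else 0) + (if i \in Bs then 1 else c))%N (m * c - 1)) => //.
  + move=> i; case: (eqVneq i j) => [->|ij]; first rewrite jB /=.
      move: mc e1 c2 m2; move: (m * c) ((m - 1) * c) => P Q; lia.
    case: (i \in Bs) => /=; move: mc c2 m2; move: (m * c) => P; lia.
  + rewrite sum_all sumk in_setT setTI setTD /= -/c -/m.
    move: mc e1 c2 m2; move: (m * c) ((m - 1) * c) => P Q; lia.
  + move=> B mB; case: (eqVneq B Bs) => [->|nB].
      rewrite sumk jB setIid setDv cards0 -/c /=.
      move: mc e1 c2 m2; move: (m * c) ((m - 1) * c) => P Q; lia.
    have jB' : j \notin B by apply/negP => jB'; apply: (negP nB); rewrite (uq B mB jB').
    rewrite sumk (negbTE jB').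
    have [i0 hi0] := no_cover ext mB.1 mBs.1.
    move: hi0; rewrite inE negb_or => /andP[i0B i0Bs].
    have h1 : (#|B :&: Bs| <= c - 1)%N.
      have -> : (c - 1 = #|Bs :\ j|)%N by rewrite /c (cardsD1 j Bs) jB add1n subn1.
      apply: subset_leq_card; apply/subsetP => i; rewrite !inE => /andP[iB ->].
      by rewrite andbT; apply: contraNneq jB' => <-.
    have h2 : (#|B :\: Bs| <= m - 1)%N.
      have -> : (m - 1 = #|~: Bs :\ i0|)%N.
        by rewrite /m (cardsD1 i0 (~: Bs)) inE i0Bs add1n subn1.
      apply: subset_leq_card; apply/subsetP => i; rewrite !inE => /andP[iBs iB].
      by rewrite iBs andbT; apply: contraNneq i0B => <-.
    have h3 : (#|B :\: Bs| * c <= (m - 1) * c)%N by rewrite leq_mul2r h2 orbT.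
    move: h1 h3 mc e1 c2 m2; move: (#|B :&: Bs|) (#|B :\: Bs| * c) (m * c) ((m - 1) * c) => X Y P Q.
    lia.
- have j : 'I_n := Ordinal (leq_trans (isT : 0 < 3) Hn).
  apply: (@key n Z (fun i => (if i == j then 0 else 0) + (if i \in [set: 'I_n] then 2 else 2))%N (n - 1)) => //.
  + move=> i; case: (i == j); rewrite inE /=; move: Hn; lia.
  + rewrite sum_all sumk in_setT setTI setTD setCT cards0 cardsT card_ord.
    move: Hn; lia.
  + move=> B mB; rewrite sumk setIT setDT cards0.
    have := h3 B mB; move: (#|B|) => x; case: (j \in B) => /=; lia.
Qed.
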